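(* In the two-valued atomic model under the proportional-to-square-roots scheme, a $(k,l)$-partition is a Nash equilibrium if the following conditions hold: (1) $l-1\ge k$ (equivalently $\frac{\sqrt a}{\sqrt a+k}\ge\frac{\sqrt a}{\sqrt a+l-1}$); (2) $k\le l-\sqrt a$ (equivalently $\frac{1}{\sqrt a+k}\ge\frac1l$); (3) $k\ge l-\sqrt a-1$ (equivalently $\frac1l\ge\frac{1}{\sqrt a+k+1}$).
   Context: Atomic model with threshold $h$: every player has stake $1$ (small) or $a$ (large), with $h,a$ integers, $2\le a\le h-1$. Pools partition the players; a pool $C$ has reward $\rho(C)=1$ if its total stake is at least $h$, else $0$. Proportional-to-square-roots scheme: player $i$ with stake $a_i$ in pool $C$ receives $\frac{\sqrt{a_i}}{\sum_{j\in C}\sqrt{a_j}}\rho(C)$. A partition into winning pools is a Nash equilibrium if no player can strictly increase her payment by moving to another pool of the partition or opening a new pool alone. For integers $k,l$ with $k+a\ge h$ and $l\ge h+1$, a $(k,l)$-partition consists only of pools of the types: Type A: exactly one large player and $k$ small players; Type B: $l$ small players; Type C: $l-1$ small players. *)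

(* Defs.v *)
From HB Require Import structures.
From mathcomp Require Import all_boot all_order all_algebra.
Set Implicit Arguments. Unset Strict Implicit. Unset Printing Implicit Defensive.
Import Order.TTheory GRing.Theory Num.Theory.
Local Open Scope ring_scope.

Section AtomicModel.
Variables (R : rcfType) (T : finType).

Definition pool_stake (s : T -> nat) (C : {set T}) : nat := (\sum_(j in C) s j)%N.

Definition reward (h : nat) (s : T -> nat) (C : {set T}) : R :=
  if (h <= pool_stake s C)%N then 1 else 0.

Definition payment (h : nat) (s : T -> nat) (i : T) (C : {set T}) : R :=
  Num.sqrt (s i)%:R / (\sum_(j in C) Num.sqrt (s j)%:R) * reward h s C.

Definition nash_equilibrium (h : nat) (s : T -> nat) (P : {set {set T}}) : Prop :=
  [/\ partition P [set: T],
      (forall C, C \in P -> (h <= pool_stake s C)%N) &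
      forall i : T,
        (forall C, C \in P -> C != pblock P i ->
           ~ (payment h s i (pblock P i) < payment h s i (i |: C)))
        /\ ~ (payment h s i (pblock P i) < payment h s i [set i])].

Definition num_large (a : nat) (s : T -> nat) (C : {set T}) : nat :=
  #|[set j in C | s j == a]|.
Definition num_small (s : T -> nat) (C : {set T}) : nat :=
  #|[set j in C | s j == 1%N]|.

(* (k,l)-partition: a partition of the players consisting only of pools of
   Type A (one large, k small), Type B (l small), Type C (l-1 small) *)
Definition kl_partition (a : nat) (s : T -> nat) (k l : nat) (P : {set {set T}}) : Prop :=
  partition P [set: T] /\
  forall C, C \in P ->
    [\/ num_large a s C = 1%N /\ num_small s C = k,
        num_large a s C = 0%N /\ num_small s C = l
      | num_large a s C = 0%N /\ num_small s C = l.-1].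

End AtomicModel.

(* Main.v *)
Require Import Defs.
From mathcomp Require Import lra zify.
From HB Require Import structures.
From mathcomp Require Import all_boot all_order all_algebra.
Import Order.TTheory GRing.Theory Num.Theory.
Local Open Scope ring_scope.

Lemma split_sum (R : rcfType) (T : finType) (a : nat) (s : T -> nat) (f : nat -> R) (C : {set T}) :
  (forall i, s i = 1%N \/ s i = a) -> (1 < a)%N ->
  \sum_(j in C) f (s j) = f a *+ num_large a s C + f 1%N *+ num_small s C.
Proof.
move=> hs ha.
rewrite (bigID (fun j => s j == a)) /=.
congr (_ + _).
  rewrite /num_large -sumr_const big_mkcond [RHS]big_mkcond /=.
  apply: eq_bigr => j _; rewrite inE.
  by case: (j \in C) => //=; case: eqP => // ->.
rewrite /num_small -sumr_const big_mkcond [RHS]big_mkcond /=.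
apply: eq_bigr => j _; rewrite inE.
case: (j \in C) => //=; case: (hs j) => ->.
  by rewrite (ltn_eqF ha).
by rewrite eqxx eq_sym (ltn_eqF ha).
Qed.

Theorem lemmaD1 (R : rcfType) (T : finType) (h a k l : nat) (s : T -> nat)
    (P : {set {set T}}) :
  (2 <= a)%N -> (a <= h.-1)%N ->
  (h <= k + a)%N -> (h.+1 <= l)%N ->
  (forall i, s i = 1%N \/ s i = a) ->
  kl_partition a s k l P ->
  (k <= l.-1)%N ->
  (k%:R : R) <= l%:R - Num.sqrt (a%:R : R) ->
  l%:R - Num.sqrt (a%:R : R) - 1 <= (k%:R : R) ->
  nash_equilibrium R h s P.
Proof.
move=> ha2 hah hkah hl hs [hpart htype] hkl c2 c3.
have ah : (a < h)%N.
  case: h hah {hkah hl} => [|h'] /= hah; last by rewrite ltnS.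
  by move: ha2; rewrite leqn0 in hah; rewrite (eqP hah).
have ha : (1 < a)%N by [].
set r := Num.sqrt (a%:R : R) in c2 c3 *.
have r1 : 1 <= r.
  by rewrite /r -[X in X <= _]sqrtr1 ler_wsqrtr // ler1n ltnW.
have el : (l%:R : R) = (l.-1)%:R + 1 by rewrite natr1 prednK // (leq_trans _ hl).
have hkl' : (k%:R : R) <= (l.-1)%:R by rewrite ler_nat.
have hhk : (h%:R : R) <= k%:R + a%:R by rewrite -natrD ler_nat.
have hhl : (h%:R : R) <= (l.-1)%:R by rewrite ler_nat -ltnS prednK // (leq_trans _ hl).
have hah' : (a%:R : R) + 1 <= h%:R.
  by rewrite natr1 ler_nat.
set S := fun X : {set T} => \sum_(j in X) Num.sqrt ((s j)%:R : R).
have hS : forall X, X \in P ->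
    [\/ S X = r + k%:R, S X = l%:R | S X = l%:R - 1].
  move=> X /htype; rewrite /S (@split_sum R T a s (fun n => Num.sqrt (n%:R : R))) //.
  rewrite sqrtr1 -/r.
  by case=> [][-> ->]; [apply: Or31 | apply: Or32 | apply: Or33];
     rewrite ?mulr1n ?mulr0n ?add0r ?addr0 //; rewrite el; lra.
have hstake : forall X, X \in P -> (h <= pool_stake s X)%N.
  move=> X /htype hX; rewrite -(ler_nat R) /pool_stake natr_sum.
  rewrite (@split_sum R T a s (fun n => (n%:R : R))) //.
  by case: hX => [][-> ->]; rewrite ?mulr1n ?mulr0n ?add0r ?addr0 //; lra.
have Spos : forall X, X \in P -> 0 < S X.
  by move=> X /hS []->; lra.
have Sle : forall X Y, X \in P -> Y \in P -> S X <= 1 + S Y.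
  by move=> X Y /hS hX /hS hY; case: hX => ->; case: hY => ->; rewrite ?el; lra.
have u1 : forall i, 1 <= Num.sqrt ((s i)%:R : R).
  move=> i; rewrite -[X in X <= _]sqrtr1 ler_wsqrtr //.
  by case: (hs i) => ->; rewrite ler1n // ltnW.
have pay : forall i X, (h <= pool_stake s X)%N ->
    payment R h s i X = Num.sqrt ((s i)%:R) / S X.
  by move=> i X hX; rewrite /payment /reward hX mulr1.
split => //.
move=> i.
have cov : i \in cover P by rewrite (cover_partition hpart) inE.
have hB := pblock_mem cov.
have hiB : i \in pblock P i by rewrite mem_pblock.
have triv : trivIset P by case/and3P: hpart.
have u0 := u1 i.
split.
  move=> C hC hCB.
  have hiC : i \notin C.
    by apply/negP => hiC; move: hCB; rewrite (def_pblock triv hC hiC) eqxx.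
  have st : (h <= pool_stake s (i |: C))%N.
    by rewrite /pool_stake big_setU1 //= (leq_trans (hstake C hC)) // leq_addl.
  rewrite (pay _ _ st) (pay _ _ (hstake _ hB)) /S big_setU1 //= -/(S C).
  have p1 := Spos _ hB; have p2 := Spos _ hC; have le := Sle _ _ hB hC.
  apply/negP; rewrite -leNgt ler_pdivlMr // mulrAC ler_pdivrMr; last by lra.
  rewrite ler_pM2l -/(S (pblock P i)); lra.
have hr0 : reward R h s [set i] = 0.
  rewrite /reward /pool_stake big_set1.
  have -> : (h <= s i)%N = false.
    apply/negbTE; rewrite -ltnNge.
    by case: (hs i) => ->; [exact: ltn_trans ha2 ah | exact: ah].
  by [].
rewrite (pay _ _ (hstake _ hB)) /payment hr0 mulr0.
apply/negP; rewrite -leNgt divr_ge0 //; last by apply/ltW/Spos.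
lra.
Qed.
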